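(* If $\mathbb W=(W,I,\preccurlyeq,\circ,{}^\sim,{}^-)$ is a DInFL-frame, then $\mathbb W\cong(\mathbb W^+)_+$ as first-order structures; more precisely, the map $x\mapsto{\uparrow}x=\{y\in W\mid x\preccurlyeq y\}$ is a bijection from $W$ onto $J^\infty(\mathbb W^+)$ such that $x\preccurlyeq y$ iff ${\uparrow}x\supseteq{\uparrow}y$, $x\in I$ iff ${\uparrow}x\subseteq I$, $z\in x\circ y$ iff ${\uparrow}z\subseteq{\uparrow}x\circ{\uparrow}y$, and ${\uparrow}(x^\sim)=({\uparrow}x)^\sim$, ${\uparrow}(x^-)=({\uparrow}x)^-$ (the latter operations being those of $(\mathbb W^+)_+$).
   Context: For a set $W$ and $\circ:W\times W\to\mathcal P(W)$, $U\circ V=\bigcup\{a\circ b\mid a\in U,b\in V\}$, $x\circ V=\{x\}\circ V$, $U\circ y=U\circ\{y\}$; $x^{\sim-}$ means $(x^\sim)^-$. A DInFL-frame is a tuple $(W,I,\preccurlyeq,\circ,{}^\sim,{}^-)$ with $I\subseteq W$, $\preccurlyeq$ a partial order, $\circ:W\times W\to\mathcal P(W)$, ${}^\sim,{}^-:W\to W$, such that for all $u,v,x,y,z$: (F1) $x\preccurlyeq y$ iff $y\in I\circ x$ iff $y\in x\circ I$; (F2) $x\preccurlyeq y$, $x\in I$ imply $y\in I$; (F3) $x\preccurlyeq y$, $x\in u\circ v$ imply $y\in u\circ v$; (F4) $(x\circ y)\circ z=x\circ(y\circ z)$; (F5) $z^\sim\in x\circ y$ iff $y^-\in z\circ x$;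 (F6) $x^{\sim-}\preccurlyeq x$ and $x^{-\sim}\preccurlyeq x$. $\mathbb W^+=(\mathsf{Up}(W,\preccurlyeq),\cap,\cup,\circ,I,\sim,-)$ with ${\sim}U=\{w\mid w^-\notin U\}$, $-U=\{w\mid w^\sim\notin U\}$; it is a complete perfect DInFL-algebra. For a complete perfect DInFL-algebra $\mathbf A$ with completely join-irreducibles $J^\infty(\mathbf A)$ and $\kappa(j)=\bigvee\{a\mid j\not\leqslant a\}$, $\mathbf A_+=(J^\infty(\mathbf A),I_1,\preccurlyeq,\circ,{}^\sim,{}^-)$ with $I_1=\{i\in J^\infty(\mathbf A)\mid i\leqslant 1\}$, $a\preccurlyeq b$ iff $b\leqslant a$, $c\in a\circ b$ iff $c\leqslant a\cdot b$, $a^\sim={\sim}\kappa(a)$, $a^-=-\kappa(a)$. *)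

(* Defs.v *)
Set Implicit Arguments.

Definition set (W : Type) := W -> Prop.
Definition subset {W : Type} (U V : set W) : Prop := forall w, U w -> V w.

(* A DInFL-frame on the carrier W.  [circ x y z] means z ∈ x ∘ y. *)
Record DInFLFrame (W : Type) := {
  fI : set W;
  fle : W -> W -> Prop;
  fcirc : W -> W -> W -> Prop;
  ftl : W -> W;
  fmn : W -> W;
  fle_refl : forall x, fle x x;
  fle_antisym : forall x y, fle x y -> fle y x -> x = y;
  fle_trans : forall x y z, fle x y -> fle y z -> fle x z;
  F1a : forall x y, fle x y <-> (exists i, fI i /\ fcirc i x y);
  F1b : forall x y, fle x y <-> (exists i, fI i /\ fcirc x i y);
  F2 : forall x y, fle x y -> fI x -> fI y;
  F3 : forall u v x y, fle x y -> fcirc u v x -> fcirc u v y;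
  (* F4 : (x∘y)∘z = x∘(y∘z) *)
  F4 : forall x y z w,
      (exists u, fcirc x y u /\ fcirc u z w) <-> (exists v, fcirc y z v /\ fcirc x v w);
  F5 : forall x y z, fcirc x y (ftl z) <-> fcirc z x (fmn y);
  F6a : forall x, fle (fmn (ftl x)) x;
  F6b : forall x, fle (ftl (fmn x)) x
}.

Section Complex.
Variables (W : Type) (F : DInFLFrame W).

(* Up-sets of (W, ≼): the carrier of W^+ *)
Definition Up (U : set W) : Prop := forall x y, fle F x y -> U x -> U y.

Definition upset (x : W) : set W := fun y => fle F x y.

(* operations of W^+ (lattice order is ⊆, join is union, 1 is I) *)
Definition Wp_one : set W := fI F.
Definition Wp_prod (U V : set W) : set W :=
  fun w => exists a b, U a /\ V b /\ fcirc F a b w.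
Definition Wp_tl (U : set W) : set W := fun w => ~ U (fmn F w).
Definition Wp_mn (U : set W) : set W := fun w => ~ U (ftl F w).

Definition bigjoin (S : set W -> Prop) : set W := fun w => exists V, S V /\ V w.

Definition Jinf (j : set W) : Prop :=
  Up j /\ forall S : set W -> Prop, (forall V, S V -> Up V) -> j = bigjoin S -> S j.

Definition kappa (j : set W) : set W :=
  bigjoin (fun a => Up a /\ ~ subset j a).

Definition Wpp_I (i : set W) : Prop := Jinf i /\ subset i Wp_one.
Definition Wpp_le (a b : set W) : Prop := subset b a.
Definition Wpp_circ (a b c : set W) : Prop := subset c (Wp_prod a b).
Definition Wpp_tl (a : set W) : set W := Wp_tl (kappa a).
Definition Wpp_mn (a : set W) : set W := Wp_mn (kappa a).

End Complex.

(* Main.v *)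
Require Import Defs.
From Stdlib Require Import Classical FunctionalExtensionality PropExtensionality.

Section Aux.
Variables (W : Type) (F : DInFLFrame W).

Lemma set_ext (U V : set W) : (forall w, U w <-> V w) -> U = V.
Proof. intro H; apply functional_extensionality; intro w; apply propositional_extensionality; auto. Qed.

Lemma galois y z : fle F y (ftl F z) <-> fle F z (fmn F y).
Proof.
  rewrite F1a, F1b. split; intros [i [Hi Hc]]; exists i; split; auto; apply F5; auto.
Qed.

Lemma tlmn x : ftl F (fmn F x) = x.
Proof. apply (fle_antisym F); [apply F6b|]. apply galois. apply fle_refl. Qed.
Lemma mntl x : fmn F (ftl F x) = x.
Proof. apply (fle_antisym F); [apply F6a|]. apply galois. apply fle_refl. Qed.

Lemma tl_anti a b : fle F a b -> fle F (ftl F b) (ftl F a).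
Proof. intro H. apply galois. rewrite mntl. auto. Qed.
Lemma mn_anti a b : fle F a b -> fle F (fmn F b) (fmn F a).
Proof. intro H. apply galois. rewrite tlmn. auto. Qed.

Lemma kappa_up x w : kappa F (upset F x) w <-> ~ fle F w x.
Proof.
  unfold kappa, bigjoin. split.
  - intros [a [[Ua Ns] aw]] Hwx. apply Ns. intros v Hv. unfold upset in Hv.
    apply (Ua w v); [eapply fle_trans; eauto|auto].
  - intro H. exists (fun u => ~ fle F u x). split; [split|auto].
    + intros u v Huv Hu Hv. apply Hu. eapply fle_trans; eauto.
    + intro Hs. apply (Hs x (fle_refl F x)). apply fle_refl.
Qed.

Lemma circ_l x a b z : fle F x a -> fcirc F a b z -> fcirc F x b z.
Proof.
  intros Hxa Hc. apply F1a in Hxa. destruct Hxa as [i [Hi Hix]].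
  destruct (proj1 (F4 F i x b z) (ex_intro _ a (conj Hix Hc))) as [v [Hv1 Hv2]].
  apply (F3 F x b v z); auto. apply F1a. eauto.
Qed.

Lemma circ_r x y b z : fle F y b -> fcirc F x b z -> fcirc F x y z.
Proof.
  intros Hyb Hc. apply F1b in Hyb. destruct Hyb as [i [Hi Hyi]].
  destruct (proj2 (F4 F x y i z) (ex_intro _ b (conj Hyi Hc))) as [u [Hu1 Hu2]].
  apply (F3 F x y u z); auto. apply F1b. eauto.
Qed.

Lemma upset_Up x : Up F (upset F x).
Proof. intros a b Hab Ha. unfold upset in *. eapply fle_trans; eauto. Qed.

Lemma upset_Jinf x : Jinf F (upset F x).
Proof.
  split; [apply upset_Up|]. intros S HS Heq.
  assert (Hx : bigjoin S x) by (rewrite <- Heq; apply fle_refl).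
  destruct Hx as [V [SV Vx]].
  replace (upset F x) with V; auto. apply set_ext. intro w. split.
  - intro Vw. rewrite Heq. exists V; auto.
  - intro Hw. apply (HS V SV x w); auto.
Qed.
End Aux.

Theorem mainTheorem7 (W : Type) (F : DInFLFrame W) :
  (* ↑ maps W into J^∞(W^+) *)
  (forall x, Jinf F (upset F x)) /\
  (* injective *)
  (forall x y, upset F x = upset F y -> x = y) /\
  (* onto J^∞(W^+) *)
  (forall j, Jinf F j -> exists x, upset F x = j) /\
  (* order *)
  (forall x y, fle F x y <-> Wpp_le (upset F x) (upset F y)) /\
  (* identity *)
  (forall x, fI F x <-> Wpp_I F (upset F x)) /\
  (* ternary relation *)
  (forall x y z, fcirc F x y z <-> Wpp_circ F (upset F x) (upset F y) (upset F z)) /\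
  (* involutions *)
  (forall x, upset F (ftl F x) = Wpp_tl F (upset F x)) /\
  (forall x, upset F (fmn F x) = Wpp_mn F (upset F x)).
Proof.
  split; [apply upset_Jinf|].
  split.
  { intros x y H. apply (fle_antisym F).
    - assert (upset F y y) by apply fle_refl. rewrite <- H in H0. exact H0.
    - assert (upset F x x) by apply fle_refl. rewrite H in H0. exact H0. }
  split.
  { intros j [Uj Hj].
    destruct (Hj (fun V => exists x, j x /\ V = upset F x)) as [x [_ Hx]].
    - intros V [x [_ ->]]. apply upset_Up.
    - apply set_ext. intro w. split.
      + intro jw. exists (upset F w). split; [eauto|apply fle_refl].
      + intros [V [[x [jx ->]] Hxw]]. apply (Uj x w); auto.
    - exists x. auto. }
  split.
  { intros x y. unfold Wpp_le, subset, upset. split.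
    - intros H w Hw. eapply fle_trans; eauto.
    - intro H. apply H, fle_refl. }
  split.
  { intro x. unfold Wpp_I, subset, Wp_one. split.
    - intro H. split; [apply upset_Jinf|]. intros w Hw. eapply F2; eauto.
    - intros [_ H]. apply H, fle_refl. }
  split.
  { intros x y z. unfold Wpp_circ, subset, Wp_prod, upset. split.
    - intros H w Hw. exists x, y. repeat split; try apply fle_refl. eapply F3; eauto.
    - intro H. destruct (H z (fle_refl F z)) as [a [b [Ha [Hb Hc]]]].
      eapply circ_r; eauto. eapply circ_l; eauto. }
  split.
  { intro x. apply set_ext. intro w. unfold Wpp_tl, Wp_tl, upset.
    rewrite kappa_up. split.
    - intros H Hn. apply Hn. apply mn_anti in H. rewrite mntl in H. exact H.
    - intro H. apply NNPP in H. apply tl_anti in H. rewrite tlmn in H. exact H. }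
  { intro x. apply set_ext. intro w. unfold Wpp_mn, Wp_mn, upset.
    rewrite kappa_up. split.
    - intros H Hn. apply Hn. apply tl_anti in H. rewrite tlmn in H. exact H.
    - intro H. apply NNPP in H. apply mn_anti in H. rewrite mntl in H. exact H. }
Qed.
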